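(* Let $n\ge1$ and let $f$ be a positive integral frieze on the orbifold $P_n^\star$, where $\star$ is an orbifold point of order $3$. Then there exists a unique triangulation $T$ of $P_n^\star$ such that $f(\tau)=1$ for all $\tau\in T$.
   Context: Let $p\ge2$ and $\lambda_p=2\cos(\pi/p)$. $P_n^\star$ is a polygon with boundary vertices $v_0,\ldots,v_{n-1}$ (clockwise, indices mod $n$) and one interior orbifold point $\star$ of order $p$; it is the quotient of the polygon $P_{pn}$ by rotation through $2\pi/p$. Arcs on $P_n^\star$ are the images of rotation-invariant orbits of diagonals (and boundary edges) of $P_{pn}$ that are pairwise non-crossing within the orbit; concretely they are: standard arcs $(v_i,v_j)$, $i\ne j$, the curve from $v_i$ to $v_j$ such that $v_{i+1},\ldots,v_{j-1}$ lie on the side not containing $\star$ (for $j=i+1$ this is a boundary segment), and pending arcs $(v_i,v_i)$, a loop at $v_i$ cutting out a monogon containing $\star$ (image of the orbit of the diameter-type diagonals $(u_i,u_{i+n})$ of $P_{pn}$). A triangulation of $P_n^\star$ is the image of a maximal rotation-invariant set of non-crossing diagonals of $P_{pn}$, equivalently a maximal set of pairwise non-crossing arcs. A frieze on $P_n^\star$ with values in an integral domain $R$ is a function $f$ from arcs to $R$ with $f(\gamma)=1$ for every boundary segment $\gamma$ and respecting skein relations: whenever arcs $\tau,\tau'$ cross at a point, $f(\tau)f(\tau')=f(\Gamma^+)+f(\Gamma^-)$ where $\Gamma^\pm$ are the two multicurves obtained by smoothing that crossing in the two possible ways, $f$ of a multicurve is the product over its components, self-crossings produced are smoothed recursively in the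 same way, a contractible closed curve has value $-2$, and a closed curve enclosing $\star$ has value $\lambda_p$. In particular for two distinct pending arcs, $f(v_i,v_i)f(v_j,v_j)=f(v_i,v_j)^2+\lambda_pf(v_i,v_j)f(v_j,v_i)+f(v_j,v_i)^2$. The frieze is positive integral if all values lie in $\mathbb{Z}_{>0}$. *)

(* Defs.v *)
From mathcomp Require Import all_boot all_order all_algebra.
Set Implicit Arguments. Unset Strict Implicit. Unset Printing Implicit Defensive.
Import Order.TTheory GRing.Theory Num.Theory.
Local Open Scope ring_scope.

(* The orbifold P_n^star with n = m.+1 boundary vertices v_0..v_{m}
   (indices mod n) and one orbifold point star.

   Curves are described through lifts to the universal cover of the
   disk minus star: a strip whose marked boundary points are the
   integers x (x lies over v_{x mod n}); translation by n is the deck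
   transformation.  A curve with lift (x, x+d), d >= 1, starts at v_x
   and goes clockwise to v_{x+d}, the boundary vertices v_{x+1} ..
   v_{x+d-1} lying on the side not containing star.

   Arcs on P_n^star are exactly the lifts with 1 <= d <= n:
     d < n : standard arc (v_x, v_{x+d})  (d = 1 : boundary segment),
     d = n : pending arc (v_x, v_x).
   An arc is encoded as (i, k) : 'I_n * 'I_n, meaning lift (i, i + k.+1). *)

Definition orbarc (m : nat) := ('I_m.+1 * 'I_m.+1)%type.

Definition arc_of (m x len : nat) : orbarc m :=
  (inord (x %% m.+1), inord len.-1).

Definition is_boundary (m : nat) (t : orbarc m) : bool := (t.2 == 0 :> nat).

Definition lift_start (m : nat) (t : orbarc m) (a : nat) : Prop :=
  (a %% m.+1)%N = t.1.

(* t and t' cross: some lifts (a, a+d) of t and (c, c+d') of t' are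
   strictly interleaved, a < c < a+d < c+d'.  Each orbit of such
   interleaved lift pairs is one crossing point in the orbifold. *)
Definition cross_lifts (m : nat) (t t' : orbarc m) (a c : nat) : Prop :=
  [/\ lift_start t a, lift_start t' c,
      (a < c)%N, (c < a + t.2.+1)%N & (a + t.2.+1 < c + t'.2.+1)%N].

Definition arcs_cross (m : nat) (t t' : orbarc m) : Prop :=
  (exists a c, cross_lifts t t' a c) \/ (exists a c, cross_lifts t' t a c).

(* Value of the (generalized) curve with lift (x, y), x < y, obtained by
   smoothing a crossing of two arcs.  If y - x <= n it is an arc.
   Otherwise n < y - x < 2n (this is always the case for such curves) and
   the curve has exactly one self-crossing; smoothing it yields
   lam * f(v_x, v_{x+e}) + f(v_{x+e}, v_x)   where e = y - x - n,
   (the closed curve around star has value lam), as in the paper's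
   relation f(v_i,v_i) f(v_j,v_j) = f(i,j)^2 + lam f(i,j) f(j,i) + f(j,i)^2. *)
Definition gval (R : idomainType) (lam : R) (m : nat) (f : orbarc m -> R)
    (x y : nat) : R :=
  let len := (y - x)%N in
  if (len <= m.+1)%N then f (arc_of m x len)
  else lam * f (arc_of m x (len - m.+1))
       + f (arc_of m (x + (len - m.+1)) (2 * m.+1 - len)).

(* For lifts a < c < b < e the two
   smoothings give the multicurves {(a,c),(b,e)} and {(a,e),(c,b)}. *)
Definition is_frieze (R : idomainType) (lam : R) (m : nat) (f : orbarc m -> R)
    : Prop :=
  (forall t : orbarc m, is_boundary t -> f t = 1) /\
  (forall (t t' : orbarc m) (a c : nat), cross_lifts t t' a c ->
     f t * f t' =
       gval lam f a c * gval lam f (a + t.2.+1) (c + t'.2.+1)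
     + gval lam f a (c + t'.2.+1) * gval lam f c (a + t.2.+1)).

(* lambda_3 = 2 cos (pi/3) = 1 *)
Definition lambda3 : int := 1.

(* Triangulation: a maximal set of pairwise non-crossing arcs which are
   not boundary segments (images of diagonals of P_{3n}). *)
Definition triangulation (m : nat) (T : {set orbarc m}) : Prop :=
  [/\ (forall t, t \in T -> ~~ is_boundary t),
      (forall t t', t \in T -> t' \in T -> ~ arcs_cross t t') &
      (forall t, ~~ is_boundary t -> t \notin T ->
          exists2 t', t' \in T & arcs_cross t t')].

(* Main.v *)
Require Import Defs.
From mathcomp Require Import all_boot all_order all_algebra.
From mathcomp Require Import zify ring lra.
Import Order.TTheory GRing.Theory Num.Theory.
Set Implicit Arguments. Unset Strict Implicit.
Lemma seq_incr (N : nat) (h q : nat -> int) :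
  h 0 = 0%R -> h 1 = 1%R ->
  (forall j, 0 < j < N -> (2 <= q j)%R) ->
  (forall j, 0 < j < N -> (h j.-1 + h j.+1 = q j * h j)%R) ->
  forall j, j < N -> (h j + 1 <= h j.+1)%R /\ (0 <= h j)%R.
Proof.
move=> h0 h1 hq hr; elim=> [|j IH] hj.
  by rewrite h0 h1.
have [IH1 IH2] := IH (ltnW hj).
have e := hr j.+1 hj; have q2 := hq j.+1 hj; rewrite /= in e.
split; nra.
Qed.
Lemma seq_lt (N : nat) (h q : nat -> int) :
  h 0 = 0%R -> h 1 = 1%R ->
  (forall j, 0 < j < N -> (2 <= q j)%R) ->
  (forall j, 0 < j < N -> (h j.-1 + h j.+1 = q j * h j)%R) ->
  forall i j, i < j <= N -> (h i < h j)%R.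
Proof.
move=> h0 h1 hq hr i; elim=> [|j IH] // /andP[hij hjN].
have [A B] := seq_incr h0 h1 hq hr hjN.
rewrite leq_eqVlt in hij; case/orP: hij => [/eqP[->]|hij]; first lra.
have := IH (introT andP (conj hij (ltnW hjN))) => /=. lra.
Qed.


Definition Ptol (k : nat) (F : nat -> nat -> int) :=
  forall a b c d, a < b -> b < c -> c < d -> d < k ->
    (F a c * F b d = F a b * F c d + F a d * F b c)%R.

Lemma poly_ear k (F : nat -> nat -> int) : 3 < k ->
  (forall i, i.+1 < k -> F i i.+1 = 1%R) -> F 0 k.-1 = 1%R ->
  (forall i j, (0 < F i j)%R) -> Ptol k F ->
  exists j, 0 < j < k.-1 /\ F j.-1 j.+1 = 1%R.
Proof.
move=> k3 he h0 hp hP.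
case: (boolP [exists j : 'I_k, (0 < j < k.-1) && (F j.-1 j.+1 == 1%R)]).
  by case/existsP=> j /andP[a /eqP b]; exists j.
move=> /existsPn hn.
pose h j := if j == 0 then 0%R else F 0 j.
pose q j := F j.-1 j.+1.
have hq : forall j, 0 < j < k.-1 -> (2 <= q j)%R.
  move=> j hj; have jk : j < k by lia.
  have := hn (Ordinal jk); rewrite /= hj /= => /eqP ne.
  have := hp j.-1 j.+1; rewrite /q; move: ne; set z := F _ _ => ne.
  lia.
have hr : forall j, 0 < j < k.-1 -> (h j.-1 + h j.+1 = q j * h j)%R.
  move=> j /andP[j0 jk]; rewrite /h /q.
  case: j j0 jk => [//|[|j]] _ jk /=.
    rewrite add0r he //=; [by rewrite mulr1 | lia].
  have := hP 0 j.+1 j.+2 j.+3 ltac:(lia) ltac:(lia) ltac:(lia) ltac:(lia).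
  rewrite he ?he; try lia.

have H := @seq_lt k.-1 h q erefl (he 0 ltac:(lia)) hq hr 1 k.-1 ltac:(lia).
move: H; rewrite /h /=.
have -> : (k.-1 == 0) = false by apply/negbTE; lia.
rewrite h0 (he 0) ?ltxx //; lia.
Qed.


Definition sk (j i : nat) := if i < j then i else i.+1.
Lemma skP j i : (sk j i = i /\ i < j) \/ (sk j i = i.+1 /\ j <= i).
Proof. rewrite /sk; case: ltnP; [left|right]; done. Qed.

Ltac sks := repeat match goal with
  | |- context [sk ?j ?i] => let H := fresh in let E := fresh in
       have [[E H]|[E H]] := skP j i; rewrite E; clear E
  end.

Lemma poly k : forall F : nat -> nat -> int,
  (forall i, i.+1 < k -> F i i.+1 = 1%R) -> F 0 k.-1 = 1%R ->
  (forall i j, (0 < F i j)%R) -> Ptol k F ->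
  forall x y, x.+1 < y -> y < k -> (0 < x) || (y < k.-1) -> F x y <> 1%R ->
  exists x' y', [/\ F x' y' = 1%R, y' < k &
     ((x < x' < y) && (y < y')) || ((x' < x < y') && (y' < y))].
Proof.
elim: k => [|k IH] F he h0 hp hP x y xy yk xy0 Fxy; first lia.
have [k3|k3] := leqP k 2; first lia.
have [j [jr ej]] := poly_ear (k := k.+1) ltac:(lia) he h0 hp hP.
rewrite /= in jr.
have [xj|xj] := eqVneq x j.
  exists j.-1, j.+1; split => //; lia.
have [yj|yj] := eqVneq y j.
  exists j.-1, j.+1; split => //; lia.
pose F' a b := F (sk j a) (sk j b).
have he' : forall i, i.+1 < k -> F' i i.+1 = 1%R.
  move=> i ik; rewrite /F'; sks; try lia.
  - by apply: he; lia.
  - rewrite -ej; congr F; lia.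
  - by apply: he; lia.
have h0' : F' 0 k.-1 = 1%R by rewrite /F'; sks; try lia; rewrite -h0; congr F; lia.
have hP' : Ptol k F'.
  move=> a b c d ab bc cd dk; rewrite /F'; apply: hP; sks; lia.
pose x0 := if x < j then x else x.-1.
pose y0 := if y < j then y else y.-1.
have ex : sk j x0 = x by rewrite /x0; case: (ltnP x j) => ?; sks; lia.
have ey : sk j y0 = y by rewrite /y0; case: (ltnP y j) => ?; sks; lia.
have nej : ~ (x = j.-1 /\ y = j.+1) by move=> [e1 e2]; apply: Fxy; rewrite e1 e2.
have [x' [y' [e1 e2 e3]]] : exists x' y', [/\ F' x' y' = 1%R, y' < k &
     ((x0 < x' < y0) && (y0 < y')) || ((x' < x0 < y') && (y' < y0))].
  apply: IH => //.
  - by move=> i j'; apply: hp.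
  - rewrite /x0 /y0; case: (ltnP x j) => ?; case: (ltnP y j) => ?; lia.
  - rewrite /y0; case: (ltnP y j) => ?; lia.
  - rewrite /x0 /y0; case: (ltnP x j) => ?; case: (ltnP y j) => ?; lia.
  - by rewrite /F' ex ey.
exists (sk j x'), (sk j y'); split => //.
  rewrite /y0; sks; lia.
move: e3; rewrite -ex -ey; sks; lia.
Qed.


Definition OF (n : nat) (F : nat -> nat -> int) : Prop :=
 [/\ (forall x, F x x.+1 = 1%R),
     (forall x y, F (x + n) (y + n) = F x y),
     (forall x y, (0 < F x y)%R),
     (forall x y, x + n < y -> y < x + 2*n ->
          F x y = (F x (y - n)%N + F (y - n)%N (x + n)%N)%R) &
     (forall w x y z, w < x -> x < y -> y < z -> y <= w + n -> z <= x + n ->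
          (F w y * F x z = F w x * F y z + F w z * F x y)%R)].

Lemma OF_per n F c x y : OF n F -> F (x + c * n) (y + c * n) = F x y.
Proof.
case=> _ hp _ _ _; elim: c => [|c IH]; first by rewrite !addn0.
rewrite mulSn.
have -> : x + (n + c*n) = (x + c*n) + n by lia.
have -> : y + (n + c*n) = (y + c*n) + n by lia.
by rewrite hp.
Qed.

Lemma OF_ear n F : 1 < n -> OF n F -> exists j, 0 < j /\ F j.-1 j.+1 = 1%R.
Proof.
move=> n1 HF; have [he hper hpos hlong hP] := HF.
case: (boolP [exists j : 'I_(2*n), (0 < j) && (F j.-1 j.+1 == 1%R)]).
  by case/existsP=> j /andP[a /eqP b]; exists j.
move=> /existsPn hn.
pose h j := if j == 0 then 0%R else if j == 2*n then F 0 n else F 0 j.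
pose q j := F j.-1 j.+1.
have hq : forall j, 0 < j < 2*n -> (2 <= q j)%R.
  move=> j hj; have jk : j < 2*n by lia.
  have := hn (Ordinal jk); rewrite /= => /negP ne.
  have := hpos j.-1 j.+1; rewrite /q. 
  have : F j.-1 j.+1 != 1%R by apply/negP => e; apply: ne; rewrite e andbT; lia.
  move/eqP; lia.
pose A e := if e == 0 then 0%R else F 0 e.
pose B e := if e == n then 0%R else F e n.
have hAB : forall e, e <= n -> h (n + e) = (A e + B e)%R.
  move=> e en; rewrite /h /A /B.
  have [->|e0] := eqVneq e 0.
    rewrite addn0 add0r; have -> : (n == 0) = false by apply/negbTE; lia.
    have -> : (0 == n) = false by apply/negbTE; lia.
    have -> : (n == 2 * n) = false by apply/negbTE; lia. done.
  have -> : (n + e == 0) = false by apply/negbTE; lia.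
  have [->|en'] := eqVneq e n.
    have -> : (n + n == 2 * n) = true by apply/eqP; lia.
    by rewrite addr0.
  have -> : (n + e == 2 * n) = false by apply/negbTE; lia.
  rewrite hlong; try lia.
  have -> : n + e - n = e by lia.
  by rewrite add0n.
have qe : forall e, 0 < e -> q (n + e) = F e.-1 e.+1.
  move=> e e0; rewrite /q -(hper e.-1 e.+1); congr F; lia.
have hA : forall e, 0 < e < n -> (A e.-1 + A e.+1 = q (n + e) * A e)%R.
  move=> e /andP[e0 en]; rewrite qe // /A.
  case: e e0 en => [//|[|e]] _ en /=.
    by rewrite add0r he mulr1.
  have := hP 0 e.+1 e.+2 e.+3 ltac:(lia) ltac:(lia) ltac:(lia) ltac:(lia) ltac:(lia).
  rewrite !he; lia.
have Bn : B n = 0%R by rewrite /B eqxx.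
have Bv : forall e, e != n -> B e = F e n by move=> e ne; rewrite /B (negbTE ne).
have hB : forall e, 0 < e < n -> (B e.-1 + B e.+1 = q (n + e) * B e)%R.
  move=> e /andP[e0 en]; rewrite qe //.
  rewrite (Bv e.-1) ?(Bv e); try (apply/eqP; lia).
  have [en1|en1] := eqVneq e.+1 n.
    rewrite en1 Bn addr0.
    have -> : F e n = 1%R by rewrite -en1 he.
    by rewrite mulr1.
  rewrite Bv //.
  have := hP e.-1 e e.+1 n ltac:(lia) ltac:(lia) ltac:(lia) ltac:(lia) ltac:(lia).
  have -> : F e.-1 e = 1%R by rewrite -(he e.-1); congr F; lia.
  rewrite he; lia.
have hr : forall j, 0 < j < 2*n -> (h j.-1 + h j.+1 = q j * h j)%R.
  move=> j /andP[j0 jk].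
  have [jn|jn] := leqP j n.
    rewrite /h.
    have -> : (j == 0) = false by apply/negbTE; lia.
    have -> : (j == 2 * n) = false by apply/negbTE; lia.
    have -> : (j.+1 == 0) = false by apply/negbTE; lia.
    have -> : (j.+1 == 2 * n) = false by apply/negbTE; lia.
    rewrite /q.
    case: j j0 jk jn => [//|[|j]] _ jk jn /=.
      by rewrite add0r he mulr1.
    have := hP 0 j.+1 j.+2 j.+3 ltac:(lia) ltac:(lia) ltac:(lia) ltac:(lia) ltac:(lia).
    have -> : (j.+1 == 2 * n) = false by apply/negbTE; lia.
    rewrite !he; lia.
  have -> : j = n + (j - n) by lia.
  set e := j - n.
  have -> : (n + e).-1 = n + e.-1 by lia.
  have -> : (n + e).+1 = n + e.+1 by lia.
  rewrite !hAB; try lia.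
  rewrite mulrDr -hA -?hB; try lia.
have h1 : h 1 = 1%R.
  rewrite /h /=; have -> : (1 == 2*n) = false by apply/negbTE; lia.
  exact: he.
have H := @seq_lt (2*n) h q erefl h1 hq hr n (2*n) ltac:(lia).
move: H; rewrite /h.
have -> : (n == 0) = false by apply/negbTE; lia.
have -> : (n == 2 * n) = false by apply/negbTE; lia.
rewrite eqxx.
have -> : (2 * n == 0) = false by apply/negbTE; lia.
by rewrite ltxx.
Qed.


Definition phi (k x : nat) := x + 1 + x %/ k.+1.

Lemma phiD k x : phi k (x + k.+1) = phi k x + k.+2.
Proof. rewrite /phi -{2}(mul1n k.+1) divnDMl //; lia. Qed.

Lemma phi_lt k x y : x < y -> phi k x < phi k y.
Proof. move=> xy; rewrite /phi; have := @leq_div2r k.+1 x y (ltnW xy); lia. Qed.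

Lemma phi_le k x y : x <= y -> phi k x <= phi k y.
Proof. rewrite leq_eqVlt => /orP[/eqP->//|/(phi_lt k)]; lia. Qed.

Lemma phiS k x : phi k x.+1 = (phi k x).+1 \/
   exists c, 0 < c /\ phi k x = c * k.+2 - 1 /\ phi k x.+1 = c * k.+2 + 1.
Proof.
rewrite /phi divnS //.
case: (boolP (k.+1 %| x.+1)) => d /=; last by left; lia.
right; exists (x %/ k.+1).+1.
have e := divnK d.
rewrite (divnS x (ltn0Sn k)) d in e.
split => //; nia.
Qed.

Lemma OF_pending k : forall F, OF k.+1 F -> exists i, F i (i + k.+1) = 1%R.
Proof.
elim: k => [|k IH] F HF.
  by case: HF => he _ _ _ _; exists 0; rewrite he.
have [he hper hpos hlong hP] := HF.
have [j [j0 ej]] := OF_ear (ltac:(lia) : 1 < k.+2) HF.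
pose G x y := F (x + j) (y + j).
pose F' x y := G (phi k x) (phi k y).
have HF' : OF k.+1 F'.
  split.
  - move=> x; rewrite /F' /G.
    have [->|[c [c0 [e1 e2]]]] := phiS k x; first by rewrite addSn he.
    rewrite e1 e2.
    have -> : c * k.+2 - 1 + j = j.-1 + c * k.+2 by lia.
    have -> : c * k.+2 + 1 + j = j.+1 + c * k.+2 by lia.
    by rewrite OF_per.
  - move=> x y; rewrite /F' /G !phiD.
    have -> : phi k x + k.+2 + j = (phi k x + j) + k.+2 by lia.
    have -> : phi k y + k.+2 + j = (phi k y + j) + k.+2 by lia.
    by rewrite hper.
  - by move=> x y; apply: hpos.
  - move=> x y h1 h2; rewrite /F' /G.
    have a1 := phi_lt k h1; rewrite phiD in a1.
    have a2 : phi k y < phi k x + 2 * k.+2.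
      have := phi_lt k h2.
      have -> : x + 2 * k.+1 = (x + k.+1) + k.+1 by lia.
      rewrite !phiD; lia.
    have ey : phi k y = phi k (y - k.+1) + k.+2.
      by rewrite -phiD; congr phi; lia.
    rewrite hlong; try lia.
    congr (F _ _ + F _ _)%R; try lia.
    by rewrite phiD; lia.
  - move=> w x y z wx xy yz yw zx; rewrite /F' /G.
    have := phi_lt k wx; have := phi_lt k xy; have := phi_lt k yz.
    have := phi_le k yw; have := phi_le k zx; rewrite !phiD => *.
    apply: hP; lia.
have [i ei] := IH F' HF'.
exists (phi k i + j).
move: ei; rewrite /F' /G phiD.
by have -> : phi k i + k.+2 + j = phi k i + j + k.+2 by lia.
Qed.


Section Main.
Variables (m : nat) (f : orbarc m -> int).

Lemma arc_of1 x len : val (arc_of m x len).1 = x %% m.+1.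
Proof. by rewrite /arc_of /= inordK // ltn_mod. Qed.
Lemma arc_of2 x len : len <= m.+1 -> val (arc_of m x len).2 = len.-1.
Proof. by move=> h; rewrite /arc_of /= inordK //; lia. Qed.
Lemma arc_of_mod x len : arc_of m (x %% m.+1) len = arc_of m x len.
Proof. by rewrite /arc_of modn_mod. Qed.
Lemma arc_ofD x len : arc_of m (x + m.+1) len = arc_of m x len.
Proof. by rewrite /arc_of modnDr. Qed.
Lemma arc_of_t (t : orbarc m) a : a %% m.+1 = t.1 -> arc_of m a t.2.+1 = t.
Proof.
move=> h; case: t h => [t1 t2] /= h.
congr pair; apply: val_inj => /=; rewrite inordK //.
by rewrite ltn_mod.
Qed.

Lemma gval_short (lam : int) x y : y - x <= m.+1 -> gval lam f x y = f (arc_of m x (y - x)).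
Proof. by move=> h; rewrite /gval h. Qed.

Definition FF x y := gval lambda3 f x y.

Lemma FF_OF : is_frieze lambda3 f -> (forall t, (0 < f t)%R) -> OF m.+1 FF.
Proof.
move=> [hb hs] hpos; split.
- move=> x; rewrite /FF gval_short; last lia.
  apply: hb; rewrite /is_boundary arc_of2; lia.
- move=> x y; rewrite /FF /gval.
  have -> : y + m.+1 - (x + m.+1) = y - x by lia.
  case: ifP => _; first by rewrite arc_ofD.
  by rewrite arc_ofD addnAC arc_ofD.
- move=> x y; rewrite /FF /gval /lambda3; case: ifP => _ //.
  rewrite mul1r; apply: addr_gt0; apply: hpos.
- move=> x y h1 h2; rewrite /FF /gval.
  have -> : (y - x <= m.+1) = false by apply/negbTE; lia.
  have -> : (y - m.+1 - x <= m.+1) = true by apply/idP; lia.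
  have -> : (x + m.+1 - (y - m.+1) <= m.+1) = true by apply/idP; lia.
  rewrite /lambda3 mul1r.
  congr (f (arc_of _ _ _) + f (arc_of _ _ _))%R; lia.
- move=> w x y z wx xy yz yw zx.
  have := hs (arc_of m w (y - w)) (arc_of m x (z - x)) w x.
  rewrite /cross_lifts /lift_start !arc_of1 !arc_of2; try lia.
  have -> : (y - w).-1.+1 = y - w by lia.
  have -> : (z - x).-1.+1 = z - x by lia.
  have -> : w + (y - w) = y by lia.
  have -> : x + (z - x) = z by lia.
  move=> H; rewrite /FF (@gval_short lambda3 w y) ?(@gval_short lambda3 x z); try lia.
  apply: H; split => //; lia.
Qed.

Lemma gval_pos : (forall t, (0 < f t)%R) -> forall x y, (0 < gval lambda3 f x y)%R.
Proof.
move=> hpos x y; rewrite /gval /lambda3; case: ifP => _ //.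
rewrite mul1r; apply: addr_gt0; apply: hpos.
Qed.

Lemma noncross : is_frieze lambda3 f -> (forall t, (0 < f t)%R) ->
  forall t t', arcs_cross t t' -> f t = 1%R -> f t' = 1%R -> False.
Proof.
move=> [hb hs] hpos t t' hc e1 e2.
have gp := gval_pos hpos.
have key : forall u v w z : int, (0 < u)%R -> (0 < v)%R -> (0 < w)%R -> (0 < z)%R ->
  (1 = u * v + w * z)%R -> False.
  move=> u v w z hu hv hw hz; have := mulr_gt0 hu hv; have := mulr_gt0 hw hz; lia.
case: hc => [[a [c h]]|[a [c h]]]; have := hs _ _ _ _ h; rewrite e1 e2 mul1r;
  apply: key; apply: gp.
Qed.

Definition TT := [set t : orbarc m | ~~ is_boundary t && (f t == 1%R)].

Lemma maximal : is_frieze lambda3 f -> (forall t, (0 < f t)%R) ->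
  forall t, ~~ is_boundary t -> f t != 1%R -> exists2 t', t' \in TT & arcs_cross t t'.
Proof.
move=> hfr hpos t tb tf.
have HF := FF_OF hfr hpos.
have [he hper hp hlong hP] := HF.
have [i0 ei0] := OF_pending HF.
pose i := i0 %% m.+1.
pose p0 := arc_of m i m.+1.
have FFn : forall x, FF x (x + m.+1) = f (arc_of m x m.+1).
  by move=> x; rewrite /FF gval_short; [congr (f (arc_of _ _ _)) |]; lia.
have fp0 : f p0 = 1%R by rewrite /p0 /i arc_of_mod -FFn.
have m0 : 0 < m by have := ltn_ord t.2; move: tb; rewrite /is_boundary; lia.
have p0T : p0 \in TT by rewrite inE /is_boundary arc_of2 // fp0 eqxx andbT; lia.
have lp0 : forall c, c %% m.+1 = i -> lift_start p0 c.
  by move=> c hc; rewrite /lift_start arc_of1 hc /i modn_mod.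
have p02 : (p0.2 : nat).+1 = m.+1 by rewrite arc_of2.
have il : i < m.+1 by rewrite ltn_mod.
pose j := val t.1.
have jl : j < m.+1 by apply: ltn_ord.
pose a := if i <= j then j else j + m.+1.
have ha1 : i <= a < i + m.+1 by rewrite /a; case: ifP => h; lia.
have ha2 : a %% m.+1 = j by rewrite /a; case: ifP => _; rewrite ?modnDr modn_small.
have ta : lift_start t a by [].
have t2 := ltn_ord t.2.
have tb' : 0 < t.2 by move: tb; rewrite /is_boundary; lia.
have tt := arc_of_t ha2.
have [dn|dn] := eqVneq (t.2 : nat) m.
  have [ai|ai] := eqVneq a i.
    exfalso; move: tf; rewrite -tt ai dn -fp0 /p0; by rewrite eqxx.
  exists p0 => //; right; exists i, a; split => //.
  - by apply: lp0; rewrite modn_small.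
  - lia.
  - rewrite p02; lia.
  - rewrite p02; lia.
have [ad|ad] := leqP (a + t.2.+1) (i + m.+1).
  pose Fp u v := FF (i + u) (i + v).
  have := @poly m.+2 Fp _ _ _ _ (a - i) (a - i + t.2.+1) _ _ _ _.
  case.
  - by move=> u _; rewrite /Fp addnS he.
  - by rewrite /Fp /= addn0 FFn.
  - by move=> u v; apply: hp.
  - by move=> a' b c d' h1 h2 h3 h4; rewrite /Fp; apply: hP; lia.
  - lia.
  - lia.
  - apply/orP; have [ai|ai] := leqP a i; [right|left]; lia.
  - rewrite /Fp.
    have -> : i + (a - i) = a by lia.
    have -> : i + (a - i + t.2.+1) = a + t.2.+1 by lia.
    rewrite /FF gval_short; last lia.
    have -> : a + t.2.+1 - a = t.2.+1 by lia.
    by rewrite tt; apply/eqP.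
  move=> x' [y' [e1 e2 e3]].
  have dxy : 2 <= y' - x' <= m.+1 by lia.
  pose t' := arc_of m (i + x') (y' - x').
  have t'2 : (t'.2 : nat).+1 = y' - x' by rewrite arc_of2; lia.
  have ft' : f t' = 1%R.
    move: e1; rewrite /Fp /FF gval_short; last lia.
    by have -> : i + y' - (i + x') = y' - x' by lia.
  have lt' : lift_start t' (i + x') by rewrite /lift_start arc_of1.
  exists t'.
    rewrite inE /is_boundary ft' eqxx andbT arc_of2; lia.
  case/orP: e3 => /andP[/andP[h1 h2] h3].
    left; exists a, (i + x'); split => //; rewrite ?t'2; lia.
  right; exists (i + x'), a; split => //; rewrite ?t'2; lia.
exists p0 => //; left; exists a, (i + m.+1).
split; [done | by apply: lp0; rewrite modnDr modn_mod | lia | lia | rewrite p02; lia].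
Qed.

End Main.

Local Open Scope ring_scope.

Theorem proposition4p30 (m : nat) (f : orbarc m -> int) :
  is_frieze lambda3 f -> (forall t, 0 < f t) ->
  exists! T : {set orbarc m}, triangulation T /\ (forall t, t \in T -> f t = 1).
Proof.
move=> hfr hpos.
exists (TT f); split.
  split; first split.
  - by move=> t; rewrite inE => /andP[].
  - move=> t t'; rewrite !inE => /andP[_ /eqP e1] /andP[_ /eqP e2] hc.
    exact (noncross hfr hpos hc e1 e2).
  - move=> t tb tn; rewrite inE tb /= in tn; exact (maximal hfr hpos tb tn).
  - by move=> t; rewrite inE => /andP[_ /eqP].
move=> T' [[hb hnc hmax] h1]; apply/setP => t; rewrite inE.
apply/idP/idP.
  move=> /andP[tb /eqP ft]; case: (boolP (t \in T')) => // tn.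
  have [t' t'T hc] := hmax t tb tn.
  exfalso; exact (noncross hfr hpos hc ft (h1 _ t'T)).
by move=> tT; rewrite hb //= h1.
Qed.
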